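(* Let $N\in\mathbb{N}$ and $y\in\Gamma_N$. Then the group $G=\langle R,s\rangle\subset GL_3(\mathbb{R})$ stabilises $X_{N,y}(\mathbb{Z})$: for every $P\in X_{N,y}(\mathbb{Z})$, the orbit $\{g(P)\mid g\in G\}$ is contained in $X_{N,y}(\mathbb{Z})$.
   Context: $R=\frac12\begin{pmatrix}1&0&-3\\0&2&0\\1&0&1\end{pmatrix}$ and $s$ is the reflection $s(a,b,c)=(a,b,-c)$. $X_{N,y}(\mathbb{Z})=\{(a,y,b)\mid a,b\in\mathbb{Z},\ a^2+2y^2+3b^2=48N+30\}$. $I_N$ is the set of odd integers $y$ with $|y|<\sqrt{15+24N}$. For $y\in I_N$, write $y^2=3p$ or $y^2=3p+1$ with $p\in\mathbb{Z}$, set $M_y=16N+10-2p$, $\mathcal{I}_{N,y}=\{m\in\mathbb{Z}\mid|m|\le\lfloor\sqrt{48N+30-2y^2}\rfloor\}$, $\Omega_{N,y}(0)=\{m\in\mathcal{I}_{N,y}\mid m^2\equiv0\ (3),\ M_y-m^2/3\text{ is a perfect square}\}$, $\Omega_{N,y}(1)=\{m\in\mathcal{I}_{N,y}\mid m^2\equiv1\ (3),\ M_y-(m^2+2)/3\text{ is a perfect square}\}$, and $\Gamma_N=\{y\in I_N\mid\Omega_{N,y}(0)\ne\emptyset\text{ or }\Omega_{N,y}(1)\ne\emptyset\}$. *)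

(* Defs.v *)
From HB Require Import structures.
From mathcomp Require Import all_boot all_order all_algebra.
From mathcomp Require Import reals.
Set Implicit Arguments. Unset Strict Implicit. Unset Printing Implicit Defensive.
Import Order.TTheory GRing.Theory Num.Theory.
Local Open Scope ring_scope.

Definition mx33 {R : realType} (rows : seq (seq R)) : 'M[R]_3 :=
  \matrix_(i < 3, j < 3) nth 0 (nth [::] rows i) j.

Definition Rmat {R : realType} : 'M[R]_3 :=
  mx33 [:: [:: 1/2; 0; -3/2]; [:: 0; 1; 0]; [:: 1/2; 0; 1/2]].

Definition smat {R : realType} : 'M[R]_3 :=
  mx33 [:: [:: 1; 0; 0]; [:: 0; 1; 0]; [:: 0; 0; -1]].

Inductive inG {R : realType} : 'M[R]_3 -> Prop :=
  | inG_R : inG Rmat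
  | inG_s : inG smat
  | inG_1 : inG 1%:M
  | inG_mul g h : inG g -> inG h -> inG (g *m h)
  | inG_inv g : inG g -> inG (invmx g).

Definition ivec {R : realType} (a b c : int) : 'cV[R]_3 :=
  \col_(i < 3) nth 0 [:: a%:~R; b%:~R; c%:~R] i.

(* (a, y, b) in X_{N,y}(Z) *)
Definition inX (N : nat) (y a b : int) : Prop :=
  a ^+ 2 + 2 * y ^+ 2 + 3 * b ^+ 2 = 48 * (N%:Z) + 30.

(* I_N : odd y with |y| < sqrt(15 + 24 N), i.e. y^2 < 15 + 24 N *)
Definition inI (N : nat) (y : int) : Prop :=
  odd `|y|%N /\ y ^+ 2 < 15 + 24 * (N%:Z).

(* p with y^2 = 3p or y^2 = 3p + 1 *)
Definition pval (y : int) : int := ((y ^+ 2) %/ 3)%Z.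

Definition Mval (N : nat) (y : int) : int := 16 * (N%:Z) + 10 - 2 * pval y.

Definition is_square (x : int) : Prop := exists k : int, x = k ^+ 2.

(* m in I_{N,y} : |m| <= floor(sqrt(48N+30-2y^2)), i.e. m^2 <= 48N+30-2y^2 *)
Definition inIm (N : nat) (y m : int) : Prop :=
  m ^+ 2 <= 48 * (N%:Z) + 30 - 2 * y ^+ 2.

Definition inOmega0 (N : nat) (y m : int) : Prop :=
  inIm N y m /\ ((m ^+ 2) %% 3)%Z = 0 /\ is_square (Mval N y - ((m ^+ 2) %/ 3)%Z).

Definition inOmega1 (N : nat) (y m : int) : Prop :=
  inIm N y m /\ ((m ^+ 2) %% 3)%Z = 1 /\ is_square (Mval N y - ((m ^+ 2 + 2) %/ 3)%Z).

Definition inGamma (N : nat) (y : int) : Prop :=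
  inI N y /\ ((exists m, inOmega0 N y m) \/ (exists m, inOmega1 N y m)).

(* Main.v *)
Require Import Defs.
From HB Require Import structures.
From mathcomp Require Import all_boot all_order all_algebra.
From mathcomp Require Import reals ring lra zify.
Import Order.TTheory GRing.Theory Num.Theory.
Local Open Scope ring_scope.

Section G.
Variable R : realType.

Definition gm (x y : int) (e : bool) : 'M[R]_3 := \matrix_(i < 3, j < 3)
 let s : R := if e then -1 else 1 in
 let p : R := (2 * x%:~R + y%:~R) / 2 in let q : R := y%:~R / 2 in
 nth 0 (nth [::] [:: [:: p; 0; -3 * s * q]; [:: 0; 1; 0]; [:: q; 0; s * p]] i) j.

Definition emul (x y u v : int) := (x * u - y * v, x * v + y * u + y * v).
Definition sig (e : bool) (u v : int) := if e then (u + v, - v) else (u, v).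

Ltac ent := apply/matrixP => -[[|[|[|?]]] ?] -[[|[|[|?]]] ?] //; rewrite !mxE ?big_ord_recr ?big_ord0 /= ?mxE.

Lemma gm_mul x y e u v f :
  gm x y e *m gm u v f =
  gm (emul x y (sig e u v).1 (sig e u v).2).1 (emul x y (sig e u v).1 (sig e u v).2).2 (e (+) f).
Proof.
by case: e; case: f; ent; rewrite /= ?(intrD, intrM, intrN, intrB); field.
Qed.


Lemma gm1 : gm 1 0 false = 1%:M.
Proof. by ent; rewrite ?mulr1n ?mulr0n //; field. Qed.

Lemma gmR : Rmat = gm 0 1 false.
Proof. by ent; field. Qed.

Lemma gms : smat = gm 1 0 true.
Proof. by ent; field. Qed.

Definition inH (g : 'M[R]_3) := exists x y e, x ^+ 2 + x * y + y ^+ 2 = 1 /\ g = gm x y e.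

Lemma inH_mul g h : inH g -> inH h -> inH (g *m h).
Proof.
move=> [x [y [e [Hn ->]]]] [u [v [f [Hn' ->]]]].
rewrite gm_mul; do 3 eexists; split; last reflexivity.
case: e => /=; rewrite -[RHS](mulr1 1) -{1}Hn -Hn'; ring.
Qed.

Lemma inH_inv g : inH g -> inH (invmx g).
Proof.
move=> [x [y [e [Hn ->]]]].
have key : forall u v, gm x y e *m gm u v e = 1%:M -> u ^+ 2 + u * v + v ^+ 2 = 1 ->
    inH (invmx (gm x y e)).
  move=> u v Hm Hn2; have [Hu _] := mulmx1_unit Hm; exists u, v, e; split => //.
  by rewrite -[gm u v e](mulKmx Hu) Hm mulmx1.
case: e key => key; [apply: (key x y) | apply: (key (x + y) (- y))].
- by rewrite gm_mul -gm1 /=; congr gm; rewrite -?Hn; ring.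
- by [].
- by rewrite gm_mul -gm1 /=; congr gm; rewrite -?Hn; ring.
- by rewrite -Hn; ring.
Qed.

Lemma inH_G g : inG g -> inH g.
Proof.
elim=> [|||g1 g2 _ H1 _ H2|g1 _ H1].
- by exists 0, 1, false; rewrite gmR; split => //.
- by exists 1, 0, true; rewrite gms; split => //.
- by exists 1, 0, false; rewrite gm1; split => //.
- exact: inH_mul.
- exact: inH_inv.
Qed.

Lemma parity {N Y a b} : inX N Y a b -> exists k, a = 2 * k - b.
Proof.
rewrite /inX => H.
have E := divz_eq (a + b) 2.
set q := ((a + b) %/ 2)%Z in E; set r := ((a + b) %% 2)%Z in E.
have r0 : 0 <= r by apply: modz_ge0.
have r2 : r < 2 by apply: ltz_pmod.
have [r00|r1] : r = 0 \/ r = 1 by lia.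
  by exists q; rewrite -[a](addrK b) E r00; ring.
have Ea : a = 2 * q + 1 - b by rewrite -[a](addrK b) E r1; ring.
have : a ^+ 2 + 2 * Y ^+ 2 + 3 * b ^+ 2 =
   2 * (2 * q ^+ 2 + 2 * q - 2 * q * b - b + 2 * b ^+ 2 + Y ^+ 2) + 1 by rewrite Ea; ring.
rewrite H; set W := (X in 2 * X + 1); lia.
Qed.

Lemma gm_act N Y x y e a b : x ^+ 2 + x * y + y ^+ 2 = 1 -> inX N Y a b ->
  exists a' b', inX N Y a' b' /\ gm x y e *m ivec a Y b = ivec a' Y b'.
Proof.
move=> Hn H; have [k Ea] := parity H; move: H; rewrite /inX Ea => H.
case: e.
- exists (x * (2 * k - b) + y * (k + b)), (- x * b + y * (k - b)); split.
    rewrite -H; transitivity (((2 * k - b) ^+ 2 + 3 * b ^+ 2) * (x ^+ 2 + x * y + y ^+ 2) + 2 * Y ^+ 2); first ring.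
    by rewrite Hn mulr1; ring.
  by ent; rewrite /= ?(intrD, intrM, intrN, intrB); field.
- exists (x * (2 * k - b) + y * (k - 2 * b)), (x * b + y * k); split.
    rewrite -H; transitivity (((2 * k - b) ^+ 2 + 3 * b ^+ 2) * (x ^+ 2 + x * y + y ^+ 2) + 2 * Y ^+ 2); first ring.
    by rewrite Hn mulr1; ring.
  by ent; rewrite /= ?(intrD, intrM, intrN, intrB); field.
Qed.

End G.

Theorem proposition8p41 (R : realType) (N : nat) (y : int) :
  inGamma N y ->
  forall a b : int, inX N y a b ->
  forall g : 'M[R]_3, inG g ->
  exists a' b' : int, inX N y a' b' /\ g *m ivec a y b = ivec a' y b'.
Proof.
move=> _ a b H g /inH_G [u [v [e [Hn ->]]]].
exact: gm_act.
Qed.
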